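(* $\mathsf{AP}(R_4,R_4)=\mathsf{AP}(R_4,R_5)=\mathsf{AP}(R_5,R_4)=\mathsf{AP}(R_4,R_1)=\mathsf{AP}(R_5,R_1)=\mathsf{L}$.
   Context: Tuples in $\{0,1\}^4$ are written as strings $abcd$. The relations $R_1,\dots,R_5\subseteq\{0,1\}^4$ are $R_1=\{0000,1000,0100,1100,1010,0110,1001,0101,0011,1011,0111,1111\}$, $R_2=\{0000,1000,0100,1100,1010,0101,0011,1111\}$, $R_3=\{0000,1100,1010,0101,0011,1011,0111,1111\}$, $R_4=\{0000,1100,1010,0101,0011,1111\}$, $R_5=\{0000,1100,1010,0110,1001,0101,0011,1111\}$. For $R,S\subseteq\{0,1\}^4$, a Boolean function $f\colon\{0,1\}^n\to\{0,1\}$ is analogy-preserving relative to $(R,S)$ if for all $\mathbf{a},\mathbf{b},\mathbf{c},\mathbf{d}\in\{0,1\}^n$ with $(a_i,b_i,c_i,d_i)\in R$ for every $i$ and such that $(f(\mathbf{a}),f(\mathbf{b}),f(\mathbf{c}),x)\in S$ for some $x\in\{0,1\}$, we have $(f(\mathbf{a}),f(\mathbf{b}),f(\mathbf{c}),f(\mathbf{d}))\in S$; $\mathsf{AP}(R,S)$ is the set of all such functions of all arities. $\mathsf{L}$ is the set of affine Boolean functions $f(x_1,\dots,x_n)=c+a_1x_1+\dots+a_nx_n\pmod 2$ with $c,a_i\in\{0,1\}$. *)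

(* Defs.v *)
From mathcomp Require Import all_boot.
Set Implicit Arguments. Unset Strict Implicit. Unset Printing Implicit Defensive.

Definition rel4 := bool -> bool -> bool -> bool -> bool.

(* Helper: membership of abcd in an explicit list of strings of 0/1 digits,
   each tuple written as the number whose decimal digits are a,b,c,d.  *)
Definition code4 (a b c d : bool) : nat :=
  1000 * a + 100 * b + 10 * c + d.

Definition rel_of (l : seq nat) : rel4 := fun a b c d => code4 a b c d \in l.

Definition R1 : rel4 := rel_of
  [:: 0000; 1000; 0100; 1100; 1010; 0110; 1001; 0101; 0011; 1011; 0111; 1111].
Definition R2 : rel4 := rel_of [:: 0000; 1000; 0100; 1100; 1010; 0101; 0011; 1111].
Definition R3 : rel4 := rel_of [:: 0000; 1100; 1010; 0101; 0011; 1011; 0111; 1111].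
Definition R4 : rel4 := rel_of [:: 0000; 1100; 1010; 0101; 0011; 1111].
Definition R5 : rel4 := rel_of [:: 0000; 1100; 1010; 0110; 1001; 0101; 0011; 1111].

Definition boolfun (n : nat) := ('I_n -> bool) -> bool.

Definition analogy_preserving (R S : rel4) (n : nat) (f : boolfun n) : Prop :=
  forall a b c d : 'I_n -> bool,
    (forall i, R (a i) (b i) (c i) (d i)) ->
    (exists x : bool, S (f a) (f b) (f c) x) ->
    S (f a) (f b) (f c) (f d).

Definition affine (n : nat) (f : boolfun n) : Prop :=
  exists (c : bool) (w : 'I_n -> bool),
    forall x : 'I_n -> bool, f x = c (+) \big[addb/false]_(i < n) (w i && x i).

Definition AP_eq_L (R S : rel4) : Prop :=
  forall (n : nat) (f : boolfun n), analogy_preserving R S f <-> affine f.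

(* Main.v *)
Require Import Defs.
From mathcomp Require Import all_boot.
From Stdlib Require Import FunctionalExtensionality.
Set Implicit Arguments. Unset Strict Implicit.

Definition imp (S : rel4) (a b c d : bool) : bool :=
  (S a b c false || S a b c true) ==> S a b c d.

Lemma exb (S : rel4) a b c d : imp S a b c d ->
  (exists x : bool, S a b c x) -> S a b c d.
Proof. by rewrite /imp => /implyP H [[] Hx]; apply: H; rewrite Hx ?orbT. Qed.

Lemma bexi (S : rel4) a b c d :
  ((exists x : bool, S a b c x) -> S a b c d) -> imp S a b c d.
Proof. move=> H; apply/implyP => /orP [] Hx; apply: H; by eexists; exact Hx. Qed.

Definition GoodS (S : rel4) := S = R4 \/ S = R5 \/ S = R1.

Lemma taut S : GoodS S -> forall o x y z : bool,
  [&& imp S o x y z, imp S o y x z, imp S x o z y, imp S x z o y,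
      imp S y o z x, imp S y z o x, imp S z x y o & imp S z y x o]
  ==> (z == o (+) x (+) y).
Proof. by case=> [->|[->|->]]; do 4!case. Qed.

Lemma taut2 S : GoodS S -> forall p q r : bool,
  imp S p q r (p (+) q (+) r).
Proof. by case=> [->|[->|->]]; do 3!case. Qed.

Lemma R5par a b c d : R5 a b c d -> d = a (+) b (+) c.
Proof. by move: a b c d; do 4!case. Qed.

Lemma R4R5 a b c d : R4 a b c d -> R5 a b c d.
Proof. by move: a b c d; do 4!case. Qed.

Lemma AP54 (R S : rel4) n (f : boolfun n) :
  (forall a b c d, R a b c d -> R5 a b c d) ->
  analogy_preserving R5 S f -> analogy_preserving R S f.
Proof. move=> HR H a b c d Hi; apply: H => i; exact: HR. Qed.

Lemma sum_xor n (F G : 'I_n -> bool) :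
  \big[addb/false]_(i < n) (F i (+) G i) =
  \big[addb/false]_(i < n) F i (+) \big[addb/false]_(i < n) G i.
Proof. exact: big_split. Qed.

Lemma aff_AP S n (f : boolfun n) : GoodS S -> affine f ->
  analogy_preserving R5 S f.
Proof.
move=> HS [c [w Hf]] a b c' d Hi Hex.
have Hd : f d = f a (+) f b (+) f c'.
  rewrite !Hf.
  have -> : \big[addb/false]_(i < n) (w i && d i) =
    \big[addb/false]_(i < n) ((w i && a i) (+) (w i && b i) (+) (w i && c' i)).
    apply: eq_bigr => i _; rewrite (R5par (Hi i)).
    by case: (w i); case: (a i); case: (b i); case: (c' i).
  rewrite !sum_xor.
  by clear Hf Hex; move: c (\big[addb/false]_(i < n) (w i && a i)) (\big[addb/false]_(i < n) (w i && b i)) (\big[addb/false]_(i < n) (w i && c' i)); do 4!case.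
rewrite Hd; apply: exb Hex; exact: taut2.
Qed.

Section Dir.
Variables (S : rel4) (n : nat) (f : boolfun n).
Hypothesis HS : GoodS S.
Hypothesis Hf : analogy_preserving R4 S f.

Let o : 'I_n -> bool := fun _ => false.

Lemma disj (x y : 'I_n -> bool) : (forall i, ~~ (x i && y i)) ->
  f (fun i => x i (+) y i) = f o (+) f x (+) f y.
Proof.
move=> Hxy.
set z := (fun i => x i (+) y i).
have T := taut HS (f o) (f x) (f y) (f z).
have C : forall (a b c d : 'I_n -> bool),
   (forall i, R4 (a i) (b i) (c i) (d i)) -> imp S (f a) (f b) (f c) (f d).
  by move=> a b c d H; apply: bexi; apply: Hf.
have Hc : forall P : bool -> bool -> bool,
   (forall u v : bool, ~~ (u && v) -> P u v) -> forall i, P (x i) (y i).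
  by move=> P HP i; apply: HP; apply: Hxy.
rewrite C ?C //= in T; try (apply: (Hc (fun u v => R4 _ _ _ _)); rewrite /o /z;
   by case; case).
all: try (by move=> i; move: (Hxy i); rewrite /o /z; case: (x i); case: (y i)).
by move/eqP: T.
Qed.

Lemma AP_aff : affine f.
Proof.
pose e (i0 : 'I_n) := fun i : 'I_n => i == i0.
exists (f o), (fun i => f (e i) (+) f o) => x.
pose g k := fun i : 'I_n => x i && (i < k).
suff H : forall k, f (g k) = f o (+) \big[addb/false]_(i < n) ((f (e i) (+) f o) && g k i).
  have := H n; have -> : g n = x.
    by apply: functional_extensionality => i; rewrite /g ltn_ord andbT.
  move=> ->; congr (_ (+) _); apply: eq_bigr => i _; by rewrite /g ltn_ord andbT.
elim=> [|k IH].
  have -> : g 0 = o by apply: functional_extensionality => i; rewrite /g andbF.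
  by rewrite big1 ?addbF // => i _; rewrite /g andbF.
case: (ltnP k n) => hk; last first.
  have -> : g k.+1 = g k.
    apply: functional_extensionality => i; rewrite /g.
    have h1 : i < k.+1 by apply: leq_trans (ltn_ord i) _; apply: leqW.
    have h2 : i < k by apply: leq_trans (ltn_ord i) hk.
    by rewrite h1 h2.
  exact: IH.
pose i0 := Ordinal hk.
case Hx : (x i0); last first.
  have -> : g k.+1 = g k.
    apply: functional_extensionality => i; rewrite /g ltnS leq_eqVlt.
    case: eqP => //= Ei.
    have -> : i = i0 by apply: val_inj.
    by rewrite Hx ltnn.
  exact: IH.
have Eg : g k.+1 = (fun i => g k i (+) e i0 i).
  apply: functional_extensionality => i; rewrite /g /e ltnS leq_eqVlt.
  case: (eqVneq i i0) => [->|ne] /=; first by rewrite Hx eqxx ltnn.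
  have -> : (nat_of_ord i == k) = false.
    by apply/negP => /eqP E; move/eqP: ne; apply; apply: val_inj.
  by rewrite addbF.
rewrite Eg disj; last first.
  move=> i; rewrite /g /e; case: (eqVneq i i0) => [->|]; last by rewrite andbF.
  by rewrite ltnn andbF.
rewrite IH (bigD1 i0) //= [in RHS](bigD1 i0) //=.
rewrite /e eqxx /g ltnn andbF andbT.
under [in RHS]eq_bigr => i /negbTE Hi do rewrite Hi addbF.
set B := \big[addb/false]_(i < n | i != i0) _.
by move: (f o) (f (eq_op^~ i0)) B; do 3!case.
Qed.
End Dir.

Lemma eqL S : GoodS S -> AP_eq_L R4 S /\ AP_eq_L R5 S.
Proof.
move=> HS; split=> n f; split.
- exact: AP_aff.
- move=> Ha; apply: AP54 R4R5 _; exact: aff_AP.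
- move=> H; apply: AP_aff HS _; exact: AP54 R4R5 H.
- exact: aff_AP.
Qed.

Theorem mainTheorem11 :
  AP_eq_L R4 R4 /\ AP_eq_L R4 R5 /\ AP_eq_L R5 R4 /\ AP_eq_L R4 R1 /\ AP_eq_L R5 R1.
Proof.
have [A1 A2] := eqL (or_introl erefl : GoodS R4).
have [B1 _] := eqL (or_intror (or_introl erefl) : GoodS R5).
have [C1 C2] := eqL (or_intror (or_intror erefl) : GoodS R1).
by [].
Qed.
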